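(* Let $\nu_0=0$, $s>0$, $\gamma\ge0$, $u>0$. Then for every $r\ge0$ and $y_0\in[0,1]$, $$g_r(y_0)=y_0\exp\Big(-\int_0^r\big(1-y(\xi;y_0)\big)\big(s+\gamma(1-y(\xi;y_0))\big)\,d\xi\Big),$$ where $y(\cdot;y_0)$ solves $\dot y=-y(1-y)[s+\gamma(1-y)]+u(1-y)$, $y(0)=y_0$.
   Context: Embedded ASG: let $\Xi^\star$ be the set of finite rooted trees in which every vertex has outdegree at most 3, the children of an outdegree-2 vertex are labelled left and right, the children of an outdegree-3 vertex are labelled left, middle and right, and every outdegree-1 vertex carries a mark $\times$ or $\circ$. The embedded ASG process $(a_r)_{r\ge0}$ starts from a single unmarked root. Independently at each leaf $\ell$: at rate $s$ two children (left, right) are attached; at rate $\gamma$ three children (left, middle, right) are attached; at rate $u\nu_1$ one child is attached and $\ell$ is marked $\times$; at rate $u\nu_0$ one child is attached and $\ell$ is marked $\circ$. Typing: given a leaf-type configuration $c\in\{0,1\}^{\text{leaves}}$, vertex types $\bar c$ are propagated towards the root as follows. A $\times$-marked vertex has type 1 and a $\circ$-marked vertex has type 0. An outdegree-2 vertex has type 1 iff both children have type 1. An outdegree-3 vertex has type 0 iff its left child has type 0 or both its middle and right children have type 0. Ancestral leaf $\lambda_v$ of a vertex $v$: - a leaf is its own ancestral leaf; - for outdegree 2, $\lambda_v$ is $\lambda$ of the right child if the right child has type 0, and $\lambda$ of the left child otherwise; - for outdegree 3, $\lambda_v$ is $\lambda$ of the right child if the middle and right children both have type 0, and $\lambda$ of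 the left child otherwise; - for outdegree 1, $\lambda_v$ is $\lambda$ of the child. $g_r(y_0)$ is the probability that $c_{\lambda_{\rm root}(a_r)}=1$, where the leaves of $a_r$ are typed independently, each with type 1 with probability $y_0$, independently of $a_r$. *)

(* Defs.v *)
From Stdlib Require Import Reals List Bool Arith.
From Coquelicot Require Import Coquelicot.
Open Scope R_scope.

(* Finite rooted trees of the embedded ASG, outdegree <= 3, with labelled
   children.  [Mk true c] is an outdegree-1 vertex marked x (cross),
   [Mk false c] is an outdegree-1 vertex marked o (circle). *)
Inductive asg_tree : Type :=
| Lf : asg_tree
| Mk : bool -> asg_tree -> asg_tree
| Bi : asg_tree -> asg_tree -> asg_tree
| Tr : asg_tree -> asg_tree -> asg_tree -> asg_tree.

Fixpoint nleaves (t : asg_tree) : nat :=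
  match t with
  | Lf => 1%nat
  | Mk _ c => nleaves c
  | Bi l r => (nleaves l + nleaves r)%nat
  | Tr l m r => (nleaves l + nleaves m + nleaves r)%nat
  end.

Inductive asg_event : Type := EBin | ETer | EMk1 | EMk0.

Definition all_events : list asg_event := EBin :: ETer :: EMk1 :: EMk0 :: nil.

Definition new_node (e : asg_event) : asg_tree :=
  match e with
  | EBin => Bi Lf Lf
  | ETer => Tr Lf Lf Lf
  | EMk1 => Mk true Lf
  | EMk0 => Mk false Lf
  end.

Definition ev_rate (s gam u nu0 nu1 : R) (e : asg_event) : R :=
  match e with
  | EBin => s
  | ETer => gam
  | EMk1 => u * nu1
  | EMk0 => u * nu0
  end.

(* apply event e at the i-th leaf (leaves numbered 0,1,... from left to right) *)
Fixpoint grow (t : asg_tree) (i : nat) (e : asg_event) : asg_tree :=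
  match t with
  | Lf => match i with O => new_node e | S _ => Lf end
  | Mk b c => Mk b (grow c i e)
  | Bi l r =>
      if Nat.ltb i (nleaves l) then Bi (grow l i e) r
      else Bi l (grow r (i - nleaves l) e)
  | Tr l m r =>
      if Nat.ltb i (nleaves l) then Tr (grow l i e) m r
      else if Nat.ltb (i - nleaves l) (nleaves m)
           then Tr l (grow m (i - nleaves l) e) r
           else Tr l m (grow r (i - nleaves l - nleaves m) e)
  end.

(* Leaf-type configurations: c j is the type of the j-th leaf (true = 1). *)
Definition shiftc (c : nat -> bool) (k : nat) : nat -> bool := fun j => c (j + k)%nat.

Fixpoint vtype (t : asg_tree) (c : nat -> bool) : bool :=
  match t with
  | Lf => c O
  | Mk b _ => b
  | Bi l r => vtype l c && vtype r (shiftc c (nleaves l))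
  | Tr l m r =>
      negb (negb (vtype l c)
            || (negb (vtype m (shiftc c (nleaves l)))
                && negb (vtype r (shiftc c (nleaves l + nleaves m)))))
  end.

Fixpoint anc_leaf (t : asg_tree) (c : nat -> bool) : nat :=
  match t with
  | Lf => O
  | Mk _ ch => anc_leaf ch c
  | Bi l r =>
      if negb (vtype r (shiftc c (nleaves l)))
      then (nleaves l + anc_leaf r (shiftc c (nleaves l)))%nat
      else anc_leaf l c
  | Tr l m r =>
      if negb (vtype m (shiftc c (nleaves l)))
         && negb (vtype r (shiftc c (nleaves l + nleaves m)))
      then (nleaves l + nleaves m + anc_leaf r (shiftc c (nleaves l + nleaves m)))%nat
      else anc_leaf l c
  end.

Fixpoint all_cfgs (n : nat) : list (list bool) :=
  match n with
  | O => nil :: nil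
  | S n' => map (cons true) (all_cfgs n') ++ map (cons false) (all_cfgs n')
  end.

Definition sumR {A : Type} (f : A -> R) (l : list A) : R :=
  fold_right (fun (a : A) (acc : R) => f a + acc) 0 l.

Definition cfg_weight (y0 : R) (l : list bool) : R :=
  fold_right (fun (b : bool) (acc : R) => (if b then y0 else 1 - y0) * acc) 1 l.

(* probability that the ancestral leaf of the root of t has type 1, when the
   leaves of t are typed i.i.d., type 1 with probability y0 *)
Definition anc_type1_prob (t : asg_tree) (y0 : R) : R :=
  sumR (fun l => cfg_weight y0 l *
                 (if nth (anc_leaf t (fun j => nth j l false)) l false then 1 else 0))
       (all_cfgs (nleaves t)).

Definition lam (s gam u nu0 nu1 : R) : R :=
  s + gam + u * nu1 + u * nu0.

(* The embedded ASG as a continuous-time Markov jump process, built from its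
   jump chain and exponential holding times: the state t is left at rate
   lam * nleaves t, and the jump "event e at leaf i" has rate ev_rate e.
   [jumpsum ... k t r] is the probability, starting from t, that the process
   makes exactly k jumps in [0, r] and that the ancestral leaf of the root of
   the tree at time r has type 1 (with i.i.d. leaf typing of parameter y0). *)
Fixpoint jumpsum (s gam u nu0 nu1 y0 : R) (k : nat) (t : asg_tree) (r : R) : R :=
  match k with
  | O => exp (- (lam s gam u nu0 nu1 * INR (nleaves t)) * r) * anc_type1_prob t y0
  | S k' =>
      sumR (fun i =>
        sumR (fun e =>
          ev_rate s gam u nu0 nu1 e *
          RInt (fun tau => exp (- (lam s gam u nu0 nu1 * INR (nleaves t)) * tau) *
                           jumpsum s gam u nu0 nu1 y0 k' (grow t i e) (r - tau)) 0 r)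
          all_events)
        (seq 0 (nleaves t))
  end.

(* g_r(y0) = P(c_{lambda_root(a_r)} = 1), a_0 = single unmarked root *)
Definition g_asg (s gam u nu0 nu1 : R) (r y0 : R) : R :=
  Series (fun k => jumpsum s gam u nu0 nu1 y0 k Lf r).

(* Main.v *)
Require Import Defs.
From Stdlib Require Import Reals Lra Lia List Bool Arith.
From Coquelicot Require Import Coquelicot.
Open Scope R_scope.

Lemma sumR_app {A} (f : A -> R) l1 l2 : sumR f (l1 ++ l2) = sumR f l1 + sumR f l2.
Proof. induction l1; simpl; [ring|]. unfold sumR in *. simpl. rewrite IHl1. ring. Qed.

Lemma sumR_cons {A} (f : A -> R) a l : sumR f (a :: l) = f a + sumR f l.
Proof. reflexivity. Qed.

Lemma sumR_nil {A} (f : A -> R) : sumR f nil = 0.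
Proof. reflexivity. Qed.

Lemma sumR_map {A B} (f : B -> R) (g : A -> B) l : sumR f (map g l) = sumR (fun x => f (g x)) l.
Proof. induction l as [|a l IH]; [reflexivity|]. cbn [map]. rewrite !sumR_cons, IH. reflexivity. Qed.

Lemma sumR_ext_in {A} (f g : A -> R) l : (forall x, In x l -> f x = g x) -> sumR f l = sumR g l.
Proof. induction l as [|a l IH]; intros H; [reflexivity|]. rewrite !sumR_cons, H, IH; auto. intros; apply H; simpl; auto. simpl; auto. Qed.

Lemma sumR_ext {A} (f g : A -> R) l : (forall x, f x = g x) -> sumR f l = sumR g l.
Proof. intros; apply sumR_ext_in; auto. Qed.

Lemma sumR_plus {A} (f g : A -> R) l : sumR (fun x => f x + g x) l = sumR f l + sumR g l.
Proof. induction l as [|a l IH]; [rewrite !sumR_nil; ring|]. rewrite !sumR_cons, IH. ring. Qed.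

Lemma sumR_scal {A} (f : A -> R) c l : sumR (fun x => c * f x) l = c * sumR f l.
Proof. induction l as [|a l IH]; [rewrite !sumR_nil; ring|]. rewrite !sumR_cons, IH. ring. Qed.

Lemma sumR_minus {A} (f g : A -> R) l : sumR (fun x => f x - g x) l = sumR f l - sumR g l.
Proof. induction l as [|a l IH]; [rewrite !sumR_nil; ring|]. rewrite !sumR_cons, IH. ring. Qed.

Lemma sumR_const {A} c (l : list A) : sumR (fun _ => c) l = c * INR (length l).
Proof. induction l as [|a l IH]; cbn [length]; [rewrite sumR_nil; simpl; ring|]. rewrite sumR_cons, IH, S_INR. ring. Qed.

Lemma sumR_le {A} (f g : A -> R) l : (forall x, In x l -> f x <= g x) -> sumR f l <= sumR g l.
Proof. induction l as [|a l IH]; intros H; [rewrite !sumR_nil; lra|]. rewrite !sumR_cons.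
  apply Rplus_le_compat. apply H; simpl; auto. apply IH; intros; apply H; simpl; auto. Qed.

Lemma sumR_abs {A} (f : A -> R) l : Rabs (sumR f l) <= sumR (fun x => Rabs (f x)) l.
Proof. induction l as [|a l IH]; [rewrite !sumR_nil, Rabs_R0; lra|]. rewrite !sumR_cons.
  eapply Rle_trans. apply Rabs_triang. lra. Qed.

Lemma nleaves_pos t : (1 <= nleaves t)%nat.
Proof. induction t; simpl; lia. Qed.

Definition nthc (l : list bool) : nat -> bool := fun j => nth j l false.

Lemma vtype_anc_ext t : forall c1 c2, (forall j, (j < nleaves t)%nat -> c1 j = c2 j) ->
  vtype t c1 = vtype t c2 /\ anc_leaf t c1 = anc_leaf t c2.
Proof.
  induction t; intros c1 c2 H; simpl in *.
  - rewrite H; auto; lia.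
  - destruct (IHt c1 c2 H) as [_ H2]. auto.
  - assert (H1 := IHt1 c1 c2 ltac:(intros; apply H; lia)).
    assert (H2 := IHt2 (shiftc c1 (nleaves t1)) (shiftc c2 (nleaves t1))
             ltac:(intros; unfold shiftc; apply H; lia)).
    destruct H1 as [-> ->], H2 as [-> ->]. auto.
  - assert (H1 := IHt1 c1 c2 ltac:(intros; apply H; lia)).
    assert (H2 := IHt2 (shiftc c1 (nleaves t1)) (shiftc c2 (nleaves t1))
             ltac:(intros; unfold shiftc; apply H; lia)).
    assert (H3 := IHt3 (shiftc c1 (nleaves t1 + nleaves t2)) (shiftc c2 (nleaves t1 + nleaves t2))
             ltac:(intros; unfold shiftc; apply H; lia)).
    destruct H1 as [-> ->], H2 as [-> _], H3 as [-> ->]. auto.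
Qed.

Lemma vtype_ext t c1 c2 : (forall j, (j < nleaves t)%nat -> c1 j = c2 j) -> vtype t c1 = vtype t c2.
Proof. intros H; apply (vtype_anc_ext t c1 c2 H). Qed.
Lemma anc_ext t c1 c2 : (forall j, (j < nleaves t)%nat -> c1 j = c2 j) -> anc_leaf t c1 = anc_leaf t c2.
Proof. intros H; apply (vtype_anc_ext t c1 c2 H). Qed.

Lemma anc_lt t : forall c, (anc_leaf t c < nleaves t)%nat.
Proof.
  induction t; intros c; simpl.
  - lia.
  - apply IHt.
  - destruct (negb _). specialize (IHt2 (shiftc c (nleaves t1))); lia. specialize (IHt1 c); lia.
  - destruct (_ && _). specialize (IHt3 (shiftc c (nleaves t1 + nleaves t2))); lia. specialize (IHt1 c); lia.
Qed.

Lemma all_cfgs_length n l : In l (all_cfgs n) -> length l = n.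
Proof.
  revert l; induction n; simpl; intros l H.
  - destruct H as [<-|[]]; auto.
  - apply in_app_or in H. destruct H as [H|H]; apply in_map_iff in H; destruct H as [l' [<- H]];
    simpl; rewrite IHn; auto.
Qed.

Lemma cfg_weight_cons y0 b l : cfg_weight y0 (b :: l) = (if b then y0 else 1 - y0) * cfg_weight y0 l.
Proof. reflexivity. Qed.

Lemma cfg_split y0 n1 n2 (H : list bool -> R) :
  sumR (fun l => cfg_weight y0 l * H l) (all_cfgs (n1 + n2)) =
  sumR (fun l1 => cfg_weight y0 l1 * sumR (fun l2 => cfg_weight y0 l2 * H (l1 ++ l2)) (all_cfgs n2)) (all_cfgs n1).
Proof.
  revert H; induction n1; intros H.
  - simpl. ring.
  - change (S n1 + n2)%nat with (S (n1 + n2)). cbn [all_cfgs].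
    rewrite !sumR_app, !sumR_map.
    assert (E : forall b, sumR (fun x => cfg_weight y0 (b :: x) * H (b :: x)) (all_cfgs (n1 + n2)) =
       sumR (fun x => cfg_weight y0 (b :: x) * sumR (fun l2 => cfg_weight y0 l2 * H ((b :: x) ++ l2)) (all_cfgs n2)) (all_cfgs n1)).
    { intros b.
      transitivity ((if b then y0 else 1 - y0) * sumR (fun x => cfg_weight y0 x * H (b :: x)) (all_cfgs (n1 + n2))).
      { rewrite <- sumR_scal. apply sumR_ext; intros; rewrite cfg_weight_cons; ring. }
      rewrite (IHn1 (fun x => H (b :: x))). rewrite <- sumR_scal. apply sumR_ext; intros; rewrite cfg_weight_cons. simpl. ring. }
    rewrite !E. reflexivity.
Qed.

Record V3 := mk3 { vf : R; vc : R; vp : R }.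

Fixpoint Dv (t : asg_tree) (L : V3) : V3 :=
  match t with
  | Lf => L
  | Mk b ch => if b then mk3 (vf (Dv ch L)) 0 1 else mk3 (vf (Dv ch L)) (vf (Dv ch L)) 0
  | Bi l r => let X := Dv l L in let Y := Dv r L in
      mk3 (vf X * vp Y + vc Y) (vc Y + vc X * vp Y) (vp X * vp Y)
  | Tr l m r => let X := Dv l L in let M := Dv m L in let Y := Dv r L in
      mk3 ((1 - (1 - vp M)*(1 - vp Y)) * vf X + (1 - vp M) * vc Y)
          ((1 - vp M) * vc Y + (1 - (1 - vp M)*(1 - vp Y)) * vc X)
          ((1 - (1 - vp M)*(1 - vp Y)) * vp X)
  end.

Definition Sc y0 t (F : bool -> bool -> R) : R :=
  sumR (fun l => cfg_weight y0 l * F (vtype t (nthc l)) (nth (anc_leaf t (nthc l)) l false))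
       (all_cfgs (nleaves t)).

Definition Fform (D : V3) (F : bool -> bool -> R) : R :=
  F true true * (vf D - vc D) + F true false * (vp D - vf D + vc D)
  + F false true * vc D + F false false * (1 - vp D - vc D).

Lemma nth_app2' (l1 l2 : list bool) n j : length l1 = n -> nth (n + j) (l1 ++ l2) false = nth j l2 false.
Proof. intros <-. rewrite app_nth2 by lia. f_equal. lia. Qed.

Lemma config_lemma y0 t : forall F, Sc y0 t F = Fform (Dv t (mk3 y0 0 y0)) F.
Proof.
  set (L := mk3 y0 0 y0).
  induction t; intros F.
  - unfold Sc, Fform. simpl. unfold nthc. simpl. ring.
  - transitivity (Sc y0 t (fun v a => F b a)). reflexivity.
    rewrite IHt. destruct b; unfold Fform; simpl; ring.
  - unfold Sc at 1. cbn [nleaves]. rewrite cfg_split.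
    transitivity (sumR (fun l1 => cfg_weight y0 l1 * Sc y0 t2 (fun v2 a2 =>
       F (vtype t1 (nthc l1) && v2) (if negb v2 then a2 else nth (anc_leaf t1 (nthc l1)) l1 false)))
       (all_cfgs (nleaves t1))).
    { apply sumR_ext_in; intros l1 H1. f_equal. unfold Sc. apply sumR_ext_in; intros l2 H2. f_equal.
      apply all_cfgs_length in H1, H2.
      cbn [vtype anc_leaf].
      rewrite (vtype_ext t1 (nthc (l1++l2)) (nthc l1)) by (intros; unfold nthc; apply app_nth1; lia).
      rewrite (anc_ext t1 (nthc (l1++l2)) (nthc l1)) by (intros; unfold nthc; apply app_nth1; lia).
      rewrite (vtype_ext t2 (shiftc (nthc (l1++l2)) (nleaves t1)) (nthc l2))
        by (intros; unfold nthc, shiftc; rewrite Nat.add_comm; apply nth_app2'; auto).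
      rewrite (anc_ext t2 (shiftc (nthc (l1++l2)) (nleaves t1)) (nthc l2))
        by (intros; unfold nthc, shiftc; rewrite Nat.add_comm; apply nth_app2'; auto).
      destruct (vtype t2 (nthc l2)); simpl.
      - pose proof (anc_lt t1 (nthc l1)). rewrite app_nth1 by lia. reflexivity.
      - rewrite nth_app2' by auto. reflexivity. }
    transitivity (Sc y0 t1 (fun v1 a1 => Fform (Dv t2 L) (fun v2 a2 => F (v1 && v2) (if negb v2 then a2 else a1)))).
    { unfold Sc at 2. apply sumR_ext; intros l1. rewrite IHt2. reflexivity. }
    rewrite IHt1. unfold Fform. cbn. ring.
  - unfold Sc at 1. cbn [nleaves]. rewrite cfg_split.
    transitivity (sumR (fun l12 => cfg_weight y0 l12 * Sc y0 t3 (fun v3 a3 =>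
       F (vtype t1 (nthc l12) && (vtype t2 (shiftc (nthc l12) (nleaves t1)) || v3))
         (if negb (vtype t2 (shiftc (nthc l12) (nleaves t1))) && negb v3 then a3
          else nth (anc_leaf t1 (nthc l12)) l12 false)))
       (all_cfgs (nleaves t1 + nleaves t2))).
    { apply sumR_ext_in; intros l12 H1. f_equal. unfold Sc. apply sumR_ext_in; intros l3 H3. f_equal.
      apply all_cfgs_length in H1, H3.
      cbn [vtype anc_leaf].
      rewrite (vtype_ext t1 (nthc (l12++l3)) (nthc l12)) by (intros; unfold nthc; apply app_nth1; lia).
      rewrite (anc_ext t1 (nthc (l12++l3)) (nthc l12)) by (intros; unfold nthc; apply app_nth1; lia).
      rewrite (vtype_ext t2 (shiftc (nthc (l12++l3)) (nleaves t1)) (shiftc (nthc l12) (nleaves t1)))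
        by (intros; unfold nthc, shiftc; apply app_nth1; lia).
      rewrite (vtype_ext t3 (shiftc (nthc (l12++l3)) (nleaves t1 + nleaves t2)) (nthc l3))
        by (intros; unfold nthc, shiftc; rewrite Nat.add_comm; apply nth_app2'; auto).
      rewrite (anc_ext t3 (shiftc (nthc (l12++l3)) (nleaves t1 + nleaves t2)) (nthc l3))
        by (intros; unfold nthc, shiftc; rewrite Nat.add_comm; apply nth_app2'; auto).
      pose proof (anc_lt t1 (nthc l12)).
      destruct (vtype t1 (nthc l12)), (vtype t2 (shiftc (nthc l12) (nleaves t1))), (vtype t3 (nthc l3));
        simpl; first [ rewrite app_nth1 by lia; reflexivity | rewrite nth_app2' by (rewrite H1; auto); reflexivity ]. }
    transitivity (sumR (fun l12 => cfg_weight y0 l12 * Fform (Dv t3 L) (fun v3 a3 =>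
       F (vtype t1 (nthc l12) && (vtype t2 (shiftc (nthc l12) (nleaves t1)) || v3))
         (if negb (vtype t2 (shiftc (nthc l12) (nleaves t1))) && negb v3 then a3
          else nth (anc_leaf t1 (nthc l12)) l12 false)))
       (all_cfgs (nleaves t1 + nleaves t2))).
    { apply sumR_ext; intros l12. rewrite IHt3. reflexivity. }
    rewrite cfg_split.
    transitivity (Sc y0 t1 (fun v1 a1 => Sc y0 t2 (fun v2 _ => Fform (Dv t3 L) (fun v3 a3 =>
       F (v1 && (v2 || v3)) (if negb v2 && negb v3 then a3 else a1))))).
    { apply sumR_ext_in; intros l1 H1. f_equal. apply sumR_ext_in; intros l2 H2. f_equal.
      apply all_cfgs_length in H1, H2.
      rewrite (vtype_ext t1 (nthc (l1++l2)) (nthc l1)) by (intros; unfold nthc; apply app_nth1; lia).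
      rewrite (anc_ext t1 (nthc (l1++l2)) (nthc l1)) by (intros; unfold nthc; apply app_nth1; lia).
      rewrite (vtype_ext t2 (shiftc (nthc (l1++l2)) (nleaves t1)) (nthc l2))
        by (intros; unfold nthc, shiftc; rewrite Nat.add_comm; apply nth_app2'; auto).
      pose proof (anc_lt t1 (nthc l1)).
      rewrite app_nth1 by lia. reflexivity. }
    transitivity (Sc y0 t1 (fun v1 a1 => Fform (Dv t2 L) (fun v2 _ => Fform (Dv t3 L) (fun v3 a3 =>
       F (v1 && (v2 || v3)) (if negb v2 && negb v3 then a3 else a1))))).
    { unfold Sc at 1. apply sumR_ext; intros l1. rewrite IHt2. reflexivity. }
    rewrite IHt1. unfold Fform. cbn. ring.
Qed.

Lemma anc_prob_Dv y0 t : anc_type1_prob t y0 = vf (Dv t (mk3 y0 0 y0)).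
Proof.
  transitivity (Sc y0 t (fun _ a => if a then 1 else 0)). reflexivity.
  rewrite config_lemma. unfold Fform. simpl. ring.
Qed.

Lemma seq_add_map n : forall k, seq k n = map (Nat.add k) (seq 0 n).
Proof.
  induction n; intros k; [reflexivity|].
  cbn [seq map]. rewrite (IHn (S k)), (IHn 1%nat), map_map. f_equal. lia.
  apply map_ext; intros; lia.
Qed.

Lemma grow_nleaves t : forall i e, (nleaves (grow t i e) <= nleaves t + 2)%nat.
Proof.
  induction t; intros i e; simpl.
  - destruct i; [destruct e; simpl; lia | simpl; lia].
  - apply IHt.
  - destruct (Nat.ltb i (nleaves t1)); simpl; [specialize (IHt1 i e) | specialize (IHt2 (i - nleaves t1)%nat e)]; lia.
  - destruct (Nat.ltb i (nleaves t1)); [|destruct (Nat.ltb (i - nleaves t1) (nleaves t2))]; simpl;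
    [specialize (IHt1 i e) | specialize (IHt2 (i - nleaves t1)%nat e) | specialize (IHt3 (i - nleaves t1 - nleaves t2)%nat e)]; lia.
Qed.

Section SSdef.
Variables s gam u nu0 nu1 : R.

Definition rate := ev_rate s gam u nu0 nu1.
Definition lamv := lam s gam u nu0 nu1.

Definition SS t (G : asg_tree -> R) : R :=
  sumR (fun i => sumR (fun e => rate e * G (grow t i e)) all_events) (seq 0 (nleaves t)).

Lemma SS_ext t F G : (forall x, F x = G x) -> SS t F = SS t G.
Proof. intros H. unfold SS. apply sumR_ext; intros i. apply sumR_ext; intros e. rewrite H; auto. Qed.

Lemma sum_rates : sumR rate all_events = lamv.
Proof. unfold rate, lamv, lam, all_events, sumR. simpl. ring. Qed.

Lemma SS_aff t F L A B C D :
  (forall x, F x = A + B * vp (Dv x L) + C * vc (Dv x L) + D * vf (Dv x L)) ->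
  SS t F = A * (INR (nleaves t) * lamv) + B * SS t (fun x => vp (Dv x L))
           + C * SS t (fun x => vc (Dv x L)) + D * SS t (fun x => vf (Dv x L)).
Proof.
  intros H. unfold SS. rewrite (sumR_ext _ (fun i => A * lamv + B * sumR (fun e => rate e * vp (Dv (grow t i e) L)) all_events
     + C * sumR (fun e => rate e * vc (Dv (grow t i e) L)) all_events
     + D * sumR (fun e => rate e * vf (Dv (grow t i e) L)) all_events)).
  - rewrite !sumR_plus, !sumR_scal, sumR_const, length_seq. ring.
  - intros i. rewrite <- sum_rates, <- !sumR_scal, <- !sumR_plus. apply sumR_ext; intros e. rewrite H. ring.
Qed.

Lemma SS_gen t F G A B : (forall x, F x = A + B * G x) -> SS t F = A * (INR (nleaves t) * lamv) + B * SS t G.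
Proof.
  intros H. unfold SS. rewrite (sumR_ext _ (fun i => A * lamv + B * sumR (fun e => rate e * G (grow t i e)) all_events)).
  - rewrite !sumR_plus, !sumR_scal, sumR_const, length_seq. ring.
  - intros i. rewrite <- sum_rates, <- !sumR_scal, <- !sumR_plus. apply sumR_ext; intros e. rewrite H. ring.
Qed.

Lemma SS_Lf F : SS Lf F = sumR (fun e => rate e * F (new_node e)) all_events.
Proof. unfold SS. cbn [nleaves seq]. rewrite sumR_cons, sumR_nil, Rplus_0_r. reflexivity. Qed.

Lemma SS_Mk b c F : SS (Mk b c) F = SS c (fun x => F (Mk b x)).
Proof. reflexivity. Qed.

Lemma SS_Bi l r F : SS (Bi l r) F = SS l (fun x => F (Bi x r)) + SS r (fun x => F (Bi l x)).
Proof.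
  unfold SS. cbn [nleaves]. rewrite seq_app, sumR_app. f_equal.
  - apply sumR_ext_in; intros i Hi. apply in_seq in Hi.
    apply sumR_ext; intros e. cbn [grow]. replace (Nat.ltb i (nleaves l)) with true; auto.
    symmetry; apply Nat.ltb_lt; lia.
  - rewrite seq_add_map, sumR_map. apply sumR_ext_in; intros i Hi. apply in_seq in Hi.
    apply sumR_ext; intros e. cbn [grow]. replace (Nat.ltb (0 + nleaves l + i) (nleaves l)) with false.
    + replace (0 + nleaves l + i - nleaves l)%nat with i by lia; reflexivity.
    + symmetry; apply Nat.ltb_ge; lia.
Qed.

Lemma SS_Tr l m r F : SS (Tr l m r) F =
  SS l (fun x => F (Tr x m r)) + SS m (fun x => F (Tr l x r)) + SS r (fun x => F (Tr l m x)).
Proof.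
  unfold SS. cbn [nleaves]. rewrite seq_app, sumR_app, seq_app, sumR_app. f_equal; [f_equal|].
  - apply sumR_ext_in; intros i Hi. apply in_seq in Hi.
    apply sumR_ext; intros e. cbn [grow]. replace (Nat.ltb i (nleaves l)) with true; auto.
    symmetry; apply Nat.ltb_lt; lia.
  - rewrite seq_add_map, sumR_map. apply sumR_ext_in; intros i Hi. apply in_seq in Hi.
    apply sumR_ext; intros e. cbn [grow]. replace (Nat.ltb (0 + nleaves l + i) (nleaves l)) with false.
    + replace (Nat.ltb (0 + nleaves l + i - nleaves l) (nleaves m)) with true.
      * replace (0 + nleaves l + i - nleaves l)%nat with i by lia; reflexivity.
      * symmetry; apply Nat.ltb_lt; lia.
    + symmetry; apply Nat.ltb_ge; lia.
  - rewrite seq_add_map, sumR_map. apply sumR_ext_in; intros i Hi. apply in_seq in Hi.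
    apply sumR_ext; intros e. cbn [grow]. replace (Nat.ltb (0 + (nleaves l + nleaves m) + i) (nleaves l)) with false.
    + replace (Nat.ltb (0 + (nleaves l + nleaves m) + i - nleaves l) (nleaves m)) with false.
      * replace (0 + (nleaves l + nleaves m) + i - nleaves l - nleaves m)%nat with i by lia; reflexivity.
      * symmetry; apply Nat.ltb_ge; lia.
    + symmetry; apply Nat.ltb_ge; lia.
Qed.

End SSdef.

Lemma is_derive_replace (f : R -> R) (x l1 l2 : R) : is_derive f x l1 -> l1 = l2 -> is_derive f x l2.
Proof. intros H <-; exact H. Qed.
Lemma d_plus (f g : R -> R) x df dg : is_derive f x df -> is_derive g x dg -> is_derive (fun z => f z + g z) x (df + dg).
Proof. intros; apply (is_derive_plus f g); auto. Qed.
Lemma d_minus (f g : R -> R) x df dg : is_derive f x df -> is_derive g x dg -> is_derive (fun z => f z - g z) x (df - dg).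
Proof. intros; apply (is_derive_minus f g); auto. Qed.
Lemma d_mult (f g : R -> R) x df dg : is_derive f x df -> is_derive g x dg -> is_derive (fun z => f z * g z) x (df * g x + f x * dg).
Proof. intros; apply (is_derive_mult f g); auto. intros; apply Rmult_comm. Qed.
Lemma d_const (c : R) x : is_derive (fun _ => c) x 0.
Proof. apply (is_derive_const c). Qed.

Ltac dstep := match goal with
  | |- is_derive (fun z => @?f z + @?g z) _ _ => apply (d_plus f g)
  | |- is_derive (fun z => @?f z - @?g z) _ _ => apply (d_minus f g)
  | |- is_derive (fun z => @?f z * @?g z) _ _ => apply (d_mult f g)
  | |- is_derive (fun _ => ?c) _ _ => apply (d_const c)
  | _ => eassumption
  end.
Ltac dtac := repeat dstep.

Section Analytic.
Variables s gam u y0 : R.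
Variable Y : R -> R.
Hypothesis HYc : forall x, continuous Y x.
Hypothesis HYd : forall x, 0 < x -> is_derive Y x (- Y x * (1 - Y x) * (s + gam * (1 - Y x)) + u * (1 - Y x)).

Definition SSx := SS s gam u 0 1.
Definition lamx := lamv s gam u 0 1.
Definition Hc x := (1 - Y x) * (s + gam * (1 - Y x)).
Definition gg x := y0 * exp (- RInt Hc 0 x).
Definition ell x := mk3 (gg x) 0 (Y x).

Lemma Hc_cont x : continuous Hc x.
Proof.
  unfold Hc. apply (continuous_mult (fun z => 1 - Y z) (fun z => s + gam * (1 - Y z))).
  apply (continuous_minus (fun _ => 1) Y). apply continuous_const. apply HYc.
  apply (continuous_plus (fun _ => s) (fun z => gam * (1 - Y z))). apply continuous_const.
  apply (continuous_mult (fun _ => gam) (fun z => 1 - Y z)). apply continuous_const.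
  apply (continuous_minus (fun _ => 1) Y). apply continuous_const. apply HYc.
Qed.

Lemma RInt_cont_derive (f : R -> R) a x : (forall z, continuous f z) -> is_derive (fun b => RInt f a b) x (f x).
Proof.
  intros Hf. apply is_derive_RInt with (a := a).
  - apply filter_forall. intros b. apply RInt_correct. apply ex_RInt_continuous. intros; apply Hf.
  - apply Hf.
Qed.

Lemma gg_derive x : is_derive gg x (- Hc x * gg x).
Proof.
  unfold gg. eapply is_derive_replace.
  - apply (d_mult (fun _ => y0) (fun z => exp (- RInt Hc 0 z))). apply d_const.
    apply (is_derive_comp exp (fun z => - RInt Hc 0 z)). apply is_derive_exp.
    apply (is_derive_opp (fun z => RInt Hc 0 z)). apply RInt_cont_derive. apply Hc_cont.
  - simpl. unfold scal; simpl. unfold mult; simpl. unfold opp; simpl. ring.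
Qed.

Definition DFc (comp : V3 -> R) t x :=
  SSx t (fun t' => comp (Dv t' (ell x))) - INR (nleaves t) * lamx * comp (Dv t (ell x)).

Lemma deriv_Dv t : forall x, 0 < x ->
  is_derive (fun z => vf (Dv t (ell z))) x (DFc vf t x) /\
  is_derive (fun z => vc (Dv t (ell z))) x (DFc vc t x) /\
  is_derive (fun z => vp (Dv t (ell z))) x (DFc vp t x).
Proof.
  induction t; intros x Hx.
  - pose proof (gg_derive x). pose proof (HYd x Hx).
    unfold DFc, SSx. rewrite !SS_Lf. unfold all_events. rewrite !sumR_cons, !sumR_nil.
    unfold rate, ev_rate, lamx, lamv, lam. cbn [Dv vf vc vp new_node ell nleaves INR].
    unfold Hc in *.
    split; [|split]; (eapply is_derive_replace; [ dtac | ]); ring.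
  - destruct (IHt x Hx) as (H1 & H2 & H3).
    unfold DFc, SSx in *. rewrite !SS_Mk. cbn [nleaves].
    destruct b; cbn [Dv vf vc vp].
    + split; [|split].
      * erewrite (SS_aff _ _ _ _ _ t _ (ell x) 0 0 0 1) by (intros; cbn [Dv vf vc vp]; ring).
        eapply is_derive_replace; [ dtac | ]. ring.
      * erewrite (SS_aff _ _ _ _ _ t _ (ell x) 0 0 0 0) by (intros; cbn [Dv vf vc vp]; ring).
        eapply is_derive_replace; [ dtac | ]. ring.
      * erewrite (SS_aff _ _ _ _ _ t _ (ell x) 1 0 0 0) by (intros; cbn [Dv vf vc vp]; ring).
        eapply is_derive_replace; [ dtac | ]. unfold lamx. ring.
    + split; [|split].
      * erewrite (SS_aff _ _ _ _ _ t _ (ell x) 0 0 0 1) by (intros; cbn [Dv vf vc vp]; ring).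
        eapply is_derive_replace; [ dtac | ]. ring.
      * erewrite (SS_aff _ _ _ _ _ t _ (ell x) 0 0 0 1) by (intros; cbn [Dv vf vc vp]; ring).
        eapply is_derive_replace; [ dtac | ]. ring.
      * erewrite (SS_aff _ _ _ _ _ t _ (ell x) 0 0 0 0) by (intros; cbn [Dv vf vc vp]; ring).
        eapply is_derive_replace; [ dtac | ]. ring.
  - destruct (IHt1 x Hx) as (H1 & H2 & H3). destruct (IHt2 x Hx) as (H4 & H5 & H6).
    unfold DFc, SSx in *. rewrite !SS_Bi. cbn [nleaves Dv vf vc vp]. rewrite plus_INR.
    split; [|split].
    + erewrite (SS_aff _ _ _ _ _ t1 _ (ell x) (vc (Dv t2 (ell x))) 0 0 (vp (Dv t2 (ell x)))) by (intros; cbn [Dv vf vc vp]; ring).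
      erewrite (SS_aff _ _ _ _ _ t2 _ (ell x) 0 (vf (Dv t1 (ell x))) 1 0) by (intros; cbn [Dv vf vc vp]; ring).
      eapply is_derive_replace; [ dtac | ]. unfold SSx, lamx. ring.
    + erewrite (SS_aff _ _ _ _ _ t1 _ (ell x) (vc (Dv t2 (ell x))) 0 (vp (Dv t2 (ell x))) 0) by (intros; cbn [Dv vf vc vp]; ring).
      erewrite (SS_aff _ _ _ _ _ t2 _ (ell x) 0 (vc (Dv t1 (ell x))) 1 0) by (intros; cbn [Dv vf vc vp]; ring).
      eapply is_derive_replace; [ dtac | ]. unfold SSx, lamx. ring.
    + erewrite (SS_aff _ _ _ _ _ t1 _ (ell x) 0 (vp (Dv t2 (ell x))) 0 0) by (intros; cbn [Dv vf vc vp]; ring).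
      erewrite (SS_aff _ _ _ _ _ t2 _ (ell x) 0 (vp (Dv t1 (ell x))) 0 0) by (intros; cbn [Dv vf vc vp]; ring).
      eapply is_derive_replace; [ dtac | ]. unfold SSx, lamx. ring.
  - destruct (IHt1 x Hx) as (H1 & H2 & H3). destruct (IHt2 x Hx) as (H4 & H5 & H6).
    destruct (IHt3 x Hx) as (H7 & H8 & H9).
    unfold DFc, SSx in *. rewrite !SS_Tr. cbn [nleaves Dv vf vc vp]. rewrite !plus_INR.
    split; [|split].
    + erewrite (SS_aff _ _ _ _ _ t1 _ (ell x) ((1 - (vp (Dv t2 (ell x)))) * (vc (Dv t3 (ell x)))) 0 0 (1 - (1 - (vp (Dv t2 (ell x)))) * (1 - (vp (Dv t3 (ell x)))))) by (intros; cbn [Dv vf vc vp]; ring).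
      erewrite (SS_aff _ _ _ _ _ t2 _ (ell x) ((vp (Dv t3 (ell x))) * (vf (Dv t1 (ell x))) + (vc (Dv t3 (ell x)))) ((1 - (vp (Dv t3 (ell x)))) * (vf (Dv t1 (ell x))) - (vc (Dv t3 (ell x)))) 0 0) by (intros; cbn [Dv vf vc vp]; ring).
      erewrite (SS_aff _ _ _ _ _ t3 _ (ell x) ((vp (Dv t2 (ell x))) * (vf (Dv t1 (ell x)))) ((1 - (vp (Dv t2 (ell x)))) * (vf (Dv t1 (ell x)))) (1 - (vp (Dv t2 (ell x)))) 0) by (intros; cbn [Dv vf vc vp]; ring).
      eapply is_derive_replace; [ dtac | ]. unfold SSx, lamx. ring.
    + erewrite (SS_aff _ _ _ _ _ t1 _ (ell x) ((1 - (vp (Dv t2 (ell x)))) * (vc (Dv t3 (ell x)))) 0 (1 - (1 - (vp (Dv t2 (ell x)))) * (1 - (vp (Dv t3 (ell x))))) 0) by (intros; cbn [Dv vf vc vp]; ring).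
      erewrite (SS_aff _ _ _ _ _ t2 _ (ell x) ((vc (Dv t3 (ell x))) + (vp (Dv t3 (ell x))) * (vc (Dv t1 (ell x)))) ((1 - (vp (Dv t3 (ell x)))) * (vc (Dv t1 (ell x))) - (vc (Dv t3 (ell x)))) 0 0) by (intros; cbn [Dv vf vc vp]; ring).
      erewrite (SS_aff _ _ _ _ _ t3 _ (ell x) ((vp (Dv t2 (ell x))) * (vc (Dv t1 (ell x)))) ((1 - (vp (Dv t2 (ell x)))) * (vc (Dv t1 (ell x)))) (1 - (vp (Dv t2 (ell x)))) 0) by (intros; cbn [Dv vf vc vp]; ring).
      eapply is_derive_replace; [ dtac | ]. unfold SSx, lamx. ring.
    + erewrite (SS_aff _ _ _ _ _ t1 _ (ell x) 0 (1 - (1 - (vp (Dv t2 (ell x)))) * (1 - (vp (Dv t3 (ell x))))) 0 0) by (intros; cbn [Dv vf vc vp]; ring).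
      erewrite (SS_aff _ _ _ _ _ t2 _ (ell x) ((vp (Dv t3 (ell x))) * (vp (Dv t1 (ell x)))) ((1 - (vp (Dv t3 (ell x)))) * (vp (Dv t1 (ell x)))) 0 0) by (intros; cbn [Dv vf vc vp]; ring).
      erewrite (SS_aff _ _ _ _ _ t3 _ (ell x) ((vp (Dv t2 (ell x))) * (vp (Dv t1 (ell x)))) ((1 - (vp (Dv t2 (ell x)))) * (vp (Dv t1 (ell x)))) 0 0) by (intros; cbn [Dv vf vc vp]; ring).
      eapply is_derive_replace; [ dtac | ]. unfold SSx, lamx. ring.
Qed.

End Analytic.

Lemma c_plus (f g : R -> R) x : continuous f x -> continuous g x -> continuous (fun z => f z + g z) x.
Proof. intros; apply (continuous_plus f g); auto. Qed.
Lemma c_minus (f g : R -> R) x : continuous f x -> continuous g x -> continuous (fun z => f z - g z) x.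
Proof. intros; apply (continuous_minus f g); auto. Qed.
Lemma c_mult (f g : R -> R) x : continuous f x -> continuous g x -> continuous (fun z => f z * g z) x.
Proof. intros; apply (continuous_mult f g); auto. Qed.
Lemma c_const (c : R) (x : R) : continuous (fun _ : R => c) x.
Proof. apply continuous_const. Qed.
Lemma c_opp (f : R -> R) x : continuous f x -> continuous (fun z => - f z) x.
Proof. intros; apply (continuous_opp f); auto. Qed.
Lemma c_exp (f : R -> R) x : continuous f x -> continuous (fun z => exp (f z)) x.
Proof. intros; apply continuous_exp_comp; auto. Qed.
Lemma c_id (x : R) : continuous (fun z : R => z) x.
Proof. apply continuous_id. Qed.

Ltac cstep := match goal with
  | |- continuous (fun z => @?f z + @?g z) _ => apply (c_plus f g)
  | |- continuous (fun z => @?f z - @?g z) _ => apply (c_minus f g)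
  | |- continuous (fun z => @?f z * @?g z) _ => apply (c_mult f g)
  | |- continuous (fun z => - @?f z) _ => apply (c_opp f)
  | |- continuous (fun z => exp (@?f z)) _ => apply (c_exp f)
  | |- continuous (fun _ => ?c) _ => apply (c_const c)
  | |- continuous (fun z => z) _ => apply c_id
  | H : forall x, continuous _ x |- _ => apply H
  | H : forall x, continuous ?h x |- continuous (fun z => ?h (@?g z)) _ => apply (continuous_comp g h); [ | apply H]
  | _ => eassumption
  end.
Ltac ctac := repeat cstep.

Lemma RInt_cont (f : R -> R) a x : (forall z, continuous f z) -> continuous (fun b => RInt f a b) x.
Proof. intros Hf. apply (ex_derive_continuous (fun b => RInt f a b)). exists (f x). apply RInt_cont_derive; auto. Qed.

Lemma mvt_ge (F dF : R -> R) r : 0 <= r -> (forall x, continuous F x) ->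
  (forall x, 0 < x -> is_derive F x (dF x)) -> (forall x, 0 <= x -> 0 <= dF x) -> F 0 <= F r.
Proof.
  intros Hr Hc Hd Hpos.
  destruct (MVT_gen F 0 r dF) as [c [Hc1 Hc2]].
  - intros x Hx. rewrite Rmin_left in Hx by lra. rewrite Rmax_right in Hx by lra. apply Hd. lra.
  - intros; apply continuity_pt_filterlim; apply Hc.
  - rewrite Rmin_left in Hc1 by lra. rewrite Rmax_right in Hc1 by lra.
    assert (0 <= dF c * (r - 0)) by (apply Rmult_le_pos; [apply Hpos; lra | lra]). lra.
Qed.

Lemma mvt_eq (F dF : R -> R) r : 0 <= r -> (forall x, continuous F x) ->
  (forall x, 0 < x -> is_derive F x (dF x)) -> (forall x, 0 <= x -> dF x = 0) -> F r = F 0.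
Proof.
  intros Hr Hc Hd H0.
  destruct (MVT_gen F 0 r dF) as [c [Hc1 Hc2]].
  - intros x Hx. rewrite Rmin_left in Hx by lra. rewrite Rmax_right in Hx by lra. apply Hd. lra.
  - intros; apply continuity_pt_filterlim; apply Hc.
  - rewrite Rmin_left in Hc1 by lra. rewrite Rmax_right in Hc1 by lra.
    rewrite H0 in Hc2 by lra. lra.
Qed.

Section Analytic2.
Variables s gam u y0 : R.
Variable Y : R -> R.
Hypothesis HYc : forall x, continuous Y x.
Hypothesis HYd : forall x, 0 < x -> is_derive Y x (- Y x * (1 - Y x) * (s + gam * (1 - Y x)) + u * (1 - Y x)).
Hypothesis HY0 : Y 0 = y0.
Hypothesis hy0 : 0 <= y0 <= 1.
Hypothesis hu : 0 < u.

Let ggc x : continuous (gg s gam y0 Y) x.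
Proof. apply (ex_derive_continuous (gg s gam y0 Y)). eexists. apply gg_derive. auto. Qed.

Lemma Dv_cont t x :
  continuous (fun z => vf (Dv t (ell s gam y0 Y z))) x /\
  continuous (fun z => vc (Dv t (ell s gam y0 Y z))) x /\
  continuous (fun z => vp (Dv t (ell s gam y0 Y z))) x.
Proof.
  pose proof (ggc x). pose proof (HYc x).
  induction t; cbn [Dv vf vc vp ell].
  - refine (conj _ (conj _ _)); ctac.
  - destruct IHt as (H1 & H2 & H3). destruct b; cbn [vf vc vp]; refine (conj _ (conj _ _)); ctac.
  - destruct IHt1 as (H1 & H2 & H3). destruct IHt2 as (H4 & H5 & H6). refine (conj _ (conj _ _)); ctac.
  - destruct IHt1 as (H1 & H2 & H3). destruct IHt2 as (H4 & H5 & H6).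
    destruct IHt3 as (H7 & H8 & H9). refine (conj _ (conj _ _)); ctac.
Qed.

Lemma gg0 : gg s gam y0 Y 0 = y0.
Proof. unfold gg. rewrite RInt_point. unfold zero; simpl. rewrite Ropp_0, exp_0. ring. Qed.

Lemma Y_le_1 r : 0 <= r -> Y r <= 1.
Proof.
  intros Hr.
  set (h := fun x => Y x * (s + gam * (1 - Y x)) - u).
  assert (hc : forall x, continuous h x) by (intros; unfold h; ctac).
  set (Q := fun x => (1 - Y x) * exp (- RInt h 0 x)).
  assert (E : Q r = Q 0).
  { apply (mvt_eq Q (fun _ => 0)); auto.
    - intros x. unfold Q. pose proof (HYc x). pose proof (RInt_cont h 0 x hc). ctac.
    - intros x Hx. unfold Q. eapply is_derive_replace.
      + apply (d_mult (fun z => 1 - Y z) (fun z => exp (- RInt h 0 z))).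
        apply (d_minus (fun _ => 1) Y). apply d_const. apply HYd; auto.
        apply (is_derive_comp exp (fun z => - RInt h 0 z)). apply is_derive_exp.
        apply (is_derive_opp (fun z => RInt h 0 z)). apply RInt_cont_derive. apply hc.
      + unfold h; simpl. unfold scal; simpl. unfold mult; simpl. unfold opp; simpl. ring. }
  unfold Q in E. rewrite RInt_point in E. unfold zero in E; simpl in E. rewrite Ropp_0, exp_0, HY0 in E.
  assert (0 < exp (- RInt h 0 r)) by apply exp_pos.
  assert (0 <= (1 - Y r) * exp (- RInt h 0 r)) by lra.
  assert (0 <= 1 - Y r).
  { destruct (Rle_or_lt 0 (1 - Y r)); auto. nra. }
  lra.
Qed.

Lemma gg_le_Y r : 0 <= r -> gg s gam y0 Y r <= Y r.
Proof.
  intros Hr.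
  pose proof (Hc_cont s gam Y HYc) as hc.
  set (V := fun x => (Y x - gg s gam y0 Y x) * exp (RInt (Hc s gam Y) 0 x)).
  assert (E : V 0 <= V r).
  { apply (mvt_ge V (fun x => exp (RInt (Hc s gam Y) 0 x) * (u * (1 - Y x)))); auto.
    - intros x. unfold V. pose proof (HYc x). pose proof (ggc x). pose proof (RInt_cont (Hc s gam Y) 0 x hc). ctac.
    - intros x Hx. unfold V. eapply is_derive_replace.
      + apply (d_mult (fun z => Y z - gg s gam y0 Y z) (fun z => exp (RInt (Hc s gam Y) 0 z))).
        apply (d_minus Y (gg s gam y0 Y)). apply HYd; auto. apply gg_derive; auto.
        apply (is_derive_comp exp (fun z => RInt (Hc s gam Y) 0 z)). apply is_derive_exp.
        apply RInt_cont_derive. apply hc.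
      + unfold Hc; simpl. unfold scal; simpl. unfold mult; simpl. ring.
    - intros x Hx. apply Rmult_le_pos. left; apply exp_pos. apply Rmult_le_pos. lra.
      pose proof (Y_le_1 x Hx). lra. }
  unfold V in E. rewrite RInt_point in E. unfold zero in E; simpl in E. rewrite exp_0, HY0, gg0 in E.
  assert (0 < exp (RInt (Hc s gam Y) 0 r)) by apply exp_pos.
  destruct (Rle_or_lt (gg s gam y0 Y r) (Y r)); auto. nra.
Qed.

Lemma gg_ge0 r : 0 <= gg s gam y0 Y r.
Proof. unfold gg. apply Rmult_le_pos. lra. left; apply exp_pos. Qed.

End Analytic2.

Definition Inv (D : V3) := 0 <= vf D - vc D /\ 0 <= vp D - vf D + vc D /\ 0 <= vc D /\ 0 <= 1 - vp D - vc D.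

Lemma Dv_inv L t : Inv L -> Inv (Dv t L).
Proof.
  intros HL. induction t; cbn [Dv].
  - auto.
  - destruct IHt as (a1 & b1 & c1 & d1). destruct b; unfold Inv; cbn [vf vc vp]; lra.
  - destruct IHt1 as (a1 & b1 & c1 & d1). destruct IHt2 as (a2 & b2 & c2 & d2).
    unfold Inv; cbn [vf vc vp].
    set (fX := vf (Dv t1 L)) in *. set (cX := vc (Dv t1 L)) in *. set (pX := vp (Dv t1 L)) in *.
    set (fY := vf (Dv t2 L)) in *. set (cY := vc (Dv t2 L)) in *. set (pY := vp (Dv t2 L)) in *.
    assert (pY0 : 0 <= pY) by lra.
    split; [|split; [|split]].
    + replace (fX * pY + cY - (cY + cX * pY)) with ((fX - cX) * pY) by ring. apply Rmult_le_pos; lra.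
    + replace (pX * pY - (fX * pY + cY) + (cY + cX * pY)) with ((pX - fX + cX) * pY) by ring. apply Rmult_le_pos; lra.
    + assert (0 <= cX * pY) by (apply Rmult_le_pos; lra). lra.
    + replace (1 - pX * pY - (cY + cX * pY)) with ((1 - pY - cY) + pY * (1 - pX - cX)) by ring.
      assert (0 <= pY * (1 - pX - cX)) by (apply Rmult_le_pos; lra). lra.
  - destruct IHt1 as (a1 & b1 & c1 & d1). destruct IHt2 as (a2 & b2 & c2 & d2).
    destruct IHt3 as (a3 & b3 & c3 & d3).
    unfold Inv; cbn [vf vc vp].
    set (fX := vf (Dv t1 L)) in *. set (cX := vc (Dv t1 L)) in *. set (pX := vp (Dv t1 L)) in *.
    set (fM := vf (Dv t2 L)) in *. set (cM := vc (Dv t2 L)) in *. set (pM := vp (Dv t2 L)) in *.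
    set (fY := vf (Dv t3 L)) in *. set (cY := vc (Dv t3 L)) in *. set (pY := vp (Dv t3 L)) in *.
    assert (m0 : 0 <= 1 - pM <= 1) by lra. assert (r0 : 0 <= 1 - pY <= 1) by lra.
    assert (mr : 0 <= (1 - pM) * (1 - pY) <= 1).
    { split. apply Rmult_le_pos; lra. replace 1 with (1 * 1) at 3 by ring. apply Rmult_le_compat; lra. }
    set (z := 1 - (1 - pM) * (1 - pY)) in *.
    assert (z0 : 0 <= z) by (unfold z; lra).
    split; [|split; [|split]].
    + replace (z * fX + (1 - pM) * cY - ((1 - pM) * cY + z * cX)) with (z * (fX - cX)) by ring. apply Rmult_le_pos; lra.
    + replace (z * pX - (z * fX + (1 - pM) * cY) + ((1 - pM) * cY + z * cX)) with (z * (pX - fX + cX)) by ring.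
      apply Rmult_le_pos; lra.
    + assert (0 <= (1 - pM) * cY) by (apply Rmult_le_pos; lra). assert (0 <= z * cX) by (apply Rmult_le_pos; lra). lra.
    + replace (1 - z * pX - ((1 - pM) * cY + z * cX)) with ((1 - pM) * (1 - pY - cY) + z * (1 - pX - cX)) by (unfold z; ring).
      assert (0 <= (1 - pM) * (1 - pY - cY)) by (apply Rmult_le_pos; lra).
      assert (0 <= z * (1 - pX - cX)) by (apply Rmult_le_pos; lra). lra.
Qed.

Lemma Inv_vf D : Inv D -> 0 <= vf D <= 1.
Proof. intros (a & b & c & d). lra. Qed.

Lemma d_exp (f : R -> R) x df : is_derive f x df -> is_derive (fun z => exp (f z)) x (df * exp (f x)).
Proof. intros H. eapply is_derive_replace. apply (is_derive_comp exp f). apply is_derive_exp. exact H.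
  simpl. unfold scal; simpl. unfold mult; simpl. ring. Qed.
Lemma d_id (x : R) : is_derive (fun z : R => z) x 1.
Proof. apply (is_derive_id x). Qed.

Ltac dstep2 := match goal with
  | |- is_derive (fun z => @?f z + @?g z) _ _ => apply (d_plus f g)
  | |- is_derive (fun z => @?f z - @?g z) _ _ => apply (d_minus f g)
  | |- is_derive (fun z => @?f z * @?g z) _ _ => apply (d_mult f g)
  | |- is_derive (fun z => exp (@?f z)) _ _ => apply (d_exp f)
  | |- is_derive (fun z => RInt ?f 0 z) _ _ => apply RInt_cont_derive
  | |- is_derive (fun _ => ?c) _ _ => apply (d_const c)
  | |- is_derive (fun z => z) _ _ => apply d_id
  | _ => eassumption
  end.
Ltac dtac2 := repeat dstep2.

Definition Cv (Lm : R) (h : R -> R) (r : R) : R :=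
  RInt (fun tau => exp (- Lm * tau) * h (r - tau)) 0 r.

Lemma ex_RInt_cont (f : R -> R) a b : (forall z, continuous f z) -> ex_RInt f a b.
Proof. intros H. apply (ex_RInt_continuous (V := R_CompleteNormedModule)). intros; apply H. Qed.

Lemma RInt_Ropp (g : R -> R) a b : ex_RInt g a b -> RInt (fun x => - g x) a b = - RInt g a b.
Proof. intros H. exact (RInt_opp (V := R_CompleteNormedModule) g a b H). Qed.
Lemma RInt_Rscal (g : R -> R) c a b : ex_RInt g a b -> RInt (fun x => c * g x) a b = c * RInt g a b.
Proof. intros H. exact (RInt_scal (V := R_CompleteNormedModule) g a b c H). Qed.
Lemma RInt_Rswap (g : R -> R) a b : ex_RInt g a b -> - RInt g a b = RInt g b a.
Proof. intros H. exact (opp_RInt_swap (V := R_CompleteNormedModule) g a b H). Qed.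
Lemma RInt_Rcomp_lin (f : R -> R) u v a b : ex_RInt f (u * a + v) (u * b + v) ->
  RInt (fun y => u * f (u * y + v)) a b = RInt f (u * a + v) (u * b + v).
Proof. intros H. exact (RInt_comp_lin (V := R_CompleteNormedModule) f u v a b H). Qed.
Lemma RInt_Rminus (f g : R -> R) a b : ex_RInt f a b -> ex_RInt g a b ->
  RInt (fun x => f x - g x) a b = RInt f a b - RInt g a b.
Proof. intros H1 H2. exact (RInt_minus (V := R_CompleteNormedModule) f g a b H1 H2). Qed.

Lemma RInt_Rext (f g : R -> R) a b : (forall x, Rmin a b < x < Rmax a b -> f x = g x) -> RInt f a b = RInt g a b.
Proof. intros H. apply RInt_ext. exact H. Qed.

Lemma Cv_alt Lm h r : (forall z, continuous h z) ->
  Cv Lm h r = exp (- Lm * r) * RInt (fun sg => exp (Lm * sg) * h sg) 0 r.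
Proof.
  intros Hh. unfold Cv.
  set (f := fun sg => exp (- Lm * (r - sg)) * h sg).
  assert (fc : forall z, continuous f z) by (intros; unfold f; ctac).
  assert (E1 := RInt_Rcomp_lin f (-1) r 0 r (ex_RInt_cont f _ _ fc)).
  replace (-1 * 0 + r) with r in E1 by ring. replace (-1 * r + r) with 0 in E1 by ring.
  assert (gc : forall z, continuous (fun y => -1 * f (-1 * y + r)) z).
  { intros z. unfold f. ctac. }
  transitivity (RInt (fun y => - (-1 * f (-1 * y + r))) 0 r).
  { apply RInt_Rext. intros y _. unfold f.
    replace (- Lm * (r - (-1 * y + r))) with (- Lm * y) by ring. replace (-1 * y + r) with (r - y) by ring. ring. }
  rewrite RInt_Ropp by (apply ex_RInt_cont; exact gc). rewrite E1.
  rewrite <- RInt_Rswap by (apply ex_RInt_cont; exact fc). rewrite Ropp_involutive.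
  transitivity (RInt (fun sg => exp (- Lm * r) * (exp (Lm * sg) * h sg)) 0 r).
  { apply RInt_Rext. intros y _. unfold f.
    replace (- Lm * (r - y)) with (- Lm * r + Lm * y) by ring. rewrite exp_plus. ring. }
  rewrite RInt_Rscal. reflexivity. apply ex_RInt_cont. intros; ctac.
Qed.

Lemma Cv_derive Lm h x : (forall z, continuous h z) -> is_derive (Cv Lm h) x (h x - Lm * Cv Lm h x).
Proof.
  intros Hh.
  assert (gc : forall z, continuous (fun sg => exp (Lm * sg) * h sg) z) by (intros; ctac).
  apply (is_derive_ext (fun r => exp (- Lm * r) * RInt (fun sg => exp (Lm * sg) * h sg) 0 r)).
  { intros r. rewrite Cv_alt; auto. }
  eapply is_derive_replace. dtac2.
  rewrite Cv_alt; auto.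
  assert (E : exp (- Lm * x) * exp (Lm * x) = 1).
  { rewrite <- exp_plus. replace (- Lm * x + Lm * x) with 0 by ring. apply exp_0. }
  replace (exp (- Lm * x) * (exp (Lm * x) * h x)) with ((exp (- Lm * x) * exp (Lm * x)) * h x) by ring.
  rewrite E. ring.
Qed.

Lemma Cv_cont Lm h x : (forall z, continuous h z) -> continuous (Cv Lm h) x.
Proof. intros Hh. apply (ex_derive_continuous (Cv Lm h)). eexists. apply Cv_derive; auto. Qed.

Lemma Cv_minus Lm h1 h2 r : (forall z, continuous h1 z) -> (forall z, continuous h2 z) ->
  Cv Lm (fun z => h1 z - h2 z) r = Cv Lm h1 r - Cv Lm h2 r.
Proof.
  intros H1 H2. unfold Cv.
  assert (c1 : forall z, continuous (fun tau => exp (- Lm * tau) * h1 (r - tau)) z).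
  { intros z. apply (c_mult (fun tau => exp (- Lm * tau)) (fun tau => h1 (r - tau))). ctac.
    apply (continuous_comp (fun tau => r - tau) h1). ctac. apply H1. }
  assert (c2 : forall z, continuous (fun tau => exp (- Lm * tau) * h2 (r - tau)) z).
  { intros z. apply (c_mult (fun tau => exp (- Lm * tau)) (fun tau => h2 (r - tau))). ctac.
    apply (continuous_comp (fun tau => r - tau) h2). ctac. apply H2. }
  rewrite (RInt_Rext _ (fun tau => (exp (- Lm * tau) * h1 (r - tau)) - (exp (- Lm * tau) * h2 (r - tau)))).
  rewrite RInt_Rminus by (apply ex_RInt_cont; auto). reflexivity.
  intros; ring.
Qed.

Lemma Cv_ext Lm h1 h2 r : (forall z, h1 z = h2 z) -> Cv Lm h1 r = Cv Lm h2 r.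
Proof. intros H. unfold Cv. apply RInt_Rext. intros; rewrite H; auto. Qed.

Lemma Cv_bound Lm c M h r : 0 <= r -> 0 < Lm + c -> 0 <= M -> (forall z, continuous h z) ->
  (forall z, 0 <= z <= r -> Rabs (h z) <= M * exp (c * z)) ->
  Rabs (Cv Lm h r) <= M * exp (c * r) / (Lm + c).
Proof.
  intros Hr Hpos HM Hh Hb. unfold Cv.
  assert (c1 : forall z, continuous (fun tau => exp (- Lm * tau) * h (r - tau)) z).
  { intros z. apply (c_mult (fun tau => exp (- Lm * tau)) (fun tau => h (r - tau))). ctac.
    apply (continuous_comp (fun tau => r - tau) h). ctac. apply Hh. }
  eapply Rle_trans. apply abs_RInt_le; auto. apply ex_RInt_cont; auto.
  set (K := M * exp (c * r)).
  set (G := fun tau => - K / (Lm + c) * exp (- (Lm + c) * tau)).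
  assert (HI : is_RInt (fun tau => K * exp (- (Lm + c) * tau)) 0 r (minus (G r) (G 0))).
  { apply (is_RInt_derive G). intros x _. unfold G. eapply is_derive_replace. dtac2. field. lra.
    intros; ctac. }
  eapply Rle_trans. apply RInt_le with (g := fun tau => K * exp (- (Lm + c) * tau)); auto.
  - apply ex_RInt_cont. intros z. apply continuous_Rabs_comp. apply c1.
  - apply ex_RInt_cont. intros; ctac.
  - intros x Hx. rewrite Rabs_mult, Rabs_pos_eq by (left; apply exp_pos).
    specialize (Hb (r - x) ltac:(lra)).
    apply Rle_trans with (exp (- Lm * x) * (M * exp (c * (r - x)))).
    apply Rmult_le_compat_l; auto. left; apply exp_pos.
    unfold K. replace (c * (r - x)) with (c * r + (- (Lm + c) * x) - (- Lm * x)) by ring.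
    unfold Rminus. rewrite !exp_plus. rewrite exp_Ropp.
    assert (exp (- Lm * x) <> 0) by (apply Rgt_not_eq, exp_pos). right. field; auto.
  - rewrite (is_RInt_unique _ _ _ _ HI). unfold minus, plus, opp, G; simpl.
    rewrite Rmult_0_r, exp_0.
    assert (0 < exp (- (Lm + c) * r)) by apply exp_pos.
    assert (0 <= K) by (unfold K; apply Rmult_le_pos; auto; left; apply exp_pos).
    apply Rle_trans with (K / (Lm + c) - K / (Lm + c) * exp (- (Lm + c) * r)).
    right. field. lra.
    assert (0 <= K / (Lm + c) * exp (- (Lm + c) * r)).
    { apply Rmult_le_pos; [|lra]. apply Rmult_le_pos; auto. left; apply Rinv_0_lt_compat; auto. }
    lra.
Qed.

Lemma sumR_derive {A} (H : A -> R -> R) (dH : A -> R) l x :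
  (forall a, is_derive (H a) x (dH a)) -> is_derive (fun z => sumR (fun a => H a z) l) x (sumR dH l).
Proof.
  intros Hd. induction l as [|a l IH].
  - apply (is_derive_ext (fun _ => 0)). intros; reflexivity. apply d_const.
  - apply (is_derive_ext (fun z => H a z + sumR (fun a => H a z) l)). intros; reflexivity.
    rewrite sumR_cons. apply (d_plus (H a)). apply Hd. exact IH.
Qed.

Lemma sumR_cont {A} (H : A -> R -> R) l x :
  (forall a, continuous (H a) x) -> continuous (fun z => sumR (fun a => H a z) l) x.
Proof.
  intros Hc. induction l as [|a l IH].
  - apply (continuous_ext (fun _ => 0)). intros; reflexivity. apply c_const.
  - apply (continuous_ext (fun z => H a z + sumR (fun a => H a z) l)). intros; reflexivity.
    apply (c_plus (H a)). apply Hc. exact IH.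
Qed.

Section SSmore.
Variables s gam u nu0 nu1 : R.
Hypothesis Hrate : forall e, 0 <= rate s gam u nu0 nu1 e.

Lemma SS_derive t (H : asg_tree -> R -> R) dH x :
  (forall t', is_derive (H t') x (dH t')) ->
  is_derive (fun z => SS s gam u nu0 nu1 t (fun t' => H t' z)) x (SS s gam u nu0 nu1 t dH).
Proof.
  intros Hd. unfold SS. apply (sumR_derive (fun i z => sumR (fun e => rate s gam u nu0 nu1 e * H (grow t i e) z) all_events)).
  intros i. apply (sumR_derive (fun e z => rate s gam u nu0 nu1 e * H (grow t i e) z)).
  intros e. eapply is_derive_replace. apply (d_mult (fun _ => rate s gam u nu0 nu1 e) (H (grow t i e))).
  apply d_const. apply Hd. ring.
Qed.

Lemma SS_cont t (H : asg_tree -> R -> R) x :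
  (forall t', continuous (H t') x) -> continuous (fun z => SS s gam u nu0 nu1 t (fun t' => H t' z)) x.
Proof.
  intros Hc. unfold SS. apply (sumR_cont (fun i z => sumR (fun e => rate s gam u nu0 nu1 e * H (grow t i e) z) all_events)).
  intros i. apply (sumR_cont (fun e z => rate s gam u nu0 nu1 e * H (grow t i e) z)).
  intros e. apply (c_mult (fun _ => rate s gam u nu0 nu1 e) (H (grow t i e))). apply c_const. apply Hc.
Qed.

Lemma SS_minus t F G : SS s gam u nu0 nu1 t (fun x => F x - G x) = SS s gam u nu0 nu1 t F - SS s gam u nu0 nu1 t G.
Proof.
  unfold SS. rewrite <- sumR_minus. apply sumR_ext; intros i. rewrite <- sumR_minus. apply sumR_ext; intros e. ring.
Qed.

Lemma SS_abs t F : Rabs (SS s gam u nu0 nu1 t F) <= SS s gam u nu0 nu1 t (fun x => Rabs (F x)).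
Proof.
  unfold SS. eapply Rle_trans. apply sumR_abs. apply sumR_le; intros i _.
  eapply Rle_trans. apply sumR_abs. apply sumR_le; intros e _.
  rewrite Rabs_mult, (Rabs_pos_eq (rate _ _ _ _ _ e)); auto. lra.
Qed.

Lemma SS_le_grow t F G : (forall i e, F (grow t i e) <= G (grow t i e)) ->
  SS s gam u nu0 nu1 t F <= SS s gam u nu0 nu1 t G.
Proof.
  intros H. unfold SS. apply sumR_le; intros i _. apply sumR_le; intros e _.
  apply Rmult_le_compat_l; auto.
Qed.

End SSmore.

Lemma RInt_Rpoint (f : R -> R) a : RInt f a a = 0.
Proof. exact (RInt_point (V := R_CompleteNormedModule) a f). Qed.

Section Main.
Variables s gam u y0 : R.
Variable Y : R -> R.
Hypothesis HYc : forall x, continuous Y x.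
Hypothesis HYd : forall x, 0 < x -> is_derive Y x (- Y x * (1 - Y x) * (s + gam * (1 - Y x)) + u * (1 - Y x)).
Hypothesis HY0 : Y 0 = y0.
Hypothesis hy0 : 0 <= y0 <= 1.
Hypothesis hs : 0 < s.
Hypothesis hgam : 0 <= gam.
Hypothesis hu : 0 < u.

Definition Phi t x := vf (Dv t (ell s gam y0 Y x)).
Definition J := jumpsum s gam u 0 1 y0.
Definition Lt t := lamx s gam u * INR (nleaves t).

Lemma Hrate e : 0 <= rate s gam u 0 1 e.
Proof. destruct e; unfold rate, ev_rate; simpl; nra. Qed.

Lemma lam_pos : 0 < lamx s gam u.
Proof. unfold lamx, lamv, lam. lra. Qed.

Lemma Phi_cont t x : continuous (Phi t) x.
Proof. unfold Phi. apply (Dv_cont s gam y0 Y HYc). Qed.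

Lemma IE t r : 0 <= r ->
  Phi t r = exp (- Lt t * r) * Phi t 0 + SSx s gam u t (fun t' => Cv (Lt t) (Phi t') r).
Proof.
  intros Hr.
  set (K := fun x => exp (Lt t * x) * Phi t x -
                     SSx s gam u t (fun t' => RInt (fun sg => exp (Lt t * sg) * Phi t' sg) 0 x)).
  assert (Hic : forall t' z, continuous (fun sg => exp (Lt t * sg) * Phi t' sg) z).
  { intros t' z. pose proof (Phi_cont t'). ctac. }
  assert (E : K r = K 0).
  { apply (mvt_eq K (fun _ => 0)); auto.
    - intros x. unfold K. pose proof (Phi_cont t).
      apply (c_minus (fun x => exp (Lt t * x) * Phi t x)). ctac.
      unfold SSx. apply (SS_cont _ _ _ _ _ t (fun t' x => RInt (fun sg => exp (Lt t * sg) * Phi t' sg) 0 x)).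
      intros t'. apply RInt_cont. apply Hic.
    - intros x Hx. unfold K.
      destruct (deriv_Dv s gam u y0 Y HYc HYd t x Hx) as (Hd & _ & _).
      eapply is_derive_replace.
      + apply (d_minus (fun x => exp (Lt t * x) * Phi t x)).
        * apply (d_mult (fun x => exp (Lt t * x)) (Phi t)). dtac2. exact Hd.
        * unfold SSx. apply (SS_derive _ _ _ _ _ t (fun t' x => RInt (fun sg => exp (Lt t * sg) * Phi t' sg) 0 x)
            (fun t' => exp (Lt t * x) * Phi t' x)).
          intros t'. apply (RInt_cont_derive (fun sg => exp (Lt t * sg) * Phi t' sg)). apply Hic.
      + unfold DFc, SSx. rewrite (SS_gen _ _ _ _ _ t (fun t' => exp (Lt t * x) * Phi t' x) (fun t' => vf (Dv t' (ell s gam y0 Y x))) 0 (exp (Lt t * x)))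
          by (intros; unfold Phi; ring).
        unfold Phi, Lt, lamx. ring. }
  unfold K in E. rewrite Rmult_0_r, exp_0, Rmult_1_l in E.
  unfold SSx in E. rewrite (SS_gen _ _ _ _ _ t (fun t' => RInt (fun sg => exp (Lt t * sg) * Phi t' sg) 0 0) (fun _ => 0) 0 0) in E
    by (intros; rewrite RInt_Rpoint; ring).
  unfold SSx. rewrite (SS_gen _ _ _ _ _ t (fun t' => Cv (Lt t) (Phi t') r) (fun t' => RInt (fun sg => exp (Lt t * sg) * Phi t' sg) 0 r) 0 (exp (- Lt t * r)))
    by (intros; rewrite Cv_alt; [ring | apply Phi_cont]).
  assert (EE : exp (- Lt t * r) * exp (Lt t * r) = 1).
  { rewrite <- exp_plus. replace (- Lt t * r + Lt t * r) with 0 by ring. apply exp_0. }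
  set (S0 := SS s gam u 0 1 t (fun t' => RInt (fun sg => exp (Lt t * sg) * Phi t' sg) 0 r)) in *.
  replace (Phi t r) with (exp (- Lt t * r) * (exp (Lt t * r) * Phi t r)) by (rewrite <- Rmult_assoc, EE; ring).
  replace (exp (Lt t * r) * Phi t r) with (Phi t 0 + S0) by lra. ring.
Qed.

Lemma J_S k t r : J (S k) t r = SSx s gam u t (fun t' => Cv (Lt t) (J k t') r).
Proof. reflexivity. Qed.

Lemma J_cont k : forall t x, continuous (J k t) x.
Proof.
  induction k; intros t x.
  - apply (continuous_ext (fun r => exp (- Lt t * r) * anc_type1_prob t y0)).
    intros; reflexivity. ctac.
  - apply (continuous_ext (fun r => SSx s gam u t (fun t' => Cv (Lt t) (J k t') r))).
    intros; reflexivity.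
    unfold SSx. apply (SS_cont _ _ _ _ _ t (fun t' r => Cv (Lt t) (J k t') r)).
    intros t'. apply Cv_cont. apply IHk.
Qed.

Fixpoint PS (N : nat) (t : asg_tree) (r : R) : R :=
  match N with O => 0 | S N' => PS N' t r + J N' t r end.

Definition Rm N t r := Phi t r - PS N t r.

Lemma PS_cont N t x : continuous (PS N t) x.
Proof.
  induction N; simpl.
  - apply c_const.
  - apply (c_plus (PS N t) (J N t)); auto. apply J_cont.
Qed.

Lemma Rm_cont N t x : continuous (Rm N t) x.
Proof. unfold Rm. apply (c_minus (Phi t) (PS N t)). apply Phi_cont. apply PS_cont. Qed.

Lemma ell0 : ell s gam y0 Y 0 = mk3 y0 0 y0.
Proof. unfold ell. rewrite gg0, HY0; auto. Qed.

Lemma Rm_rec N : forall t r, 0 <= r -> Rm (S N) t r = SSx s gam u t (fun t' => Cv (Lt t) (Rm N t') r).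
Proof.
  induction N; intros t r Hr.
  - unfold Rm. simpl PS. unfold J. cbn [jumpsum].
    rewrite anc_prob_Dv, <- ell0. fold (Phi t 0).
    rewrite (IE t r Hr). unfold SSx. rewrite Rplus_0_l.
    unfold Lt, lamx, lamv.
    rewrite (SS_ext _ _ _ _ _ t (fun t' => Cv (lam s gam u 0 1 * INR (nleaves t)) (fun r0 => Phi t' r0 - 0) r)
              (fun t' => Cv (lam s gam u 0 1 * INR (nleaves t)) (Phi t') r)).
    ring. intros; apply Cv_ext; intros; ring.
  - transitivity (Rm (S N) t r - J (S N) t r).
    { unfold Rm. simpl PS. ring. }
    rewrite IHN by auto. rewrite J_S. unfold SSx. rewrite <- SS_minus.
    apply SS_ext. intros t'. rewrite <- Cv_minus by (intros; first [apply Rm_cont | apply J_cont]).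
    apply Cv_ext. intros z. unfold Rm. simpl PS. ring.
Qed.

Definition Bd N n r := exp (2 * lamx s gam u * r) * INR n / (INR n + 2 * INR N).

Lemma frac_mono (a b c : R) : 0 < a -> a <= b -> 0 <= c -> a / (a + c) <= b / (b + c).
Proof.
  intros Ha Hab Hc. unfold Rdiv.
  apply Rmult_le_reg_r with ((a + c) * (b + c)). apply Rmult_lt_0_compat; lra.
  replace (a * / (a + c) * ((a + c) * (b + c))) with (a * (b + c)) by (field; lra).
  replace (b * / (b + c) * ((a + c) * (b + c))) with (b * (a + c)) by (field; lra).
  nra.
Qed.

Lemma Phi_bound t r : 0 <= r -> 0 <= Phi t r <= 1.
Proof.
  intros Hr. unfold Phi. apply Inv_vf. apply Dv_inv.
  unfold Inv, ell; cbn [vf vc vp].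
  pose proof (gg_ge0 s gam y0 Y hy0 r). pose proof (gg_le_Y s gam u y0 Y HYc HYd HY0 hy0 hu r Hr).
  pose proof (Y_le_1 s gam u y0 Y HYc HYd HY0 hy0 r Hr). lra.
Qed.

Lemma Rm_bound N : forall t r, 0 <= r -> Rabs (Rm N t r) <= Bd N (nleaves t) r.
Proof.
  pose proof lam_pos as Hl.
  induction N; intros t r Hr; unfold Bd.
  - unfold Rm. simpl PS. rewrite Rminus_0_r. pose proof (Phi_bound t r Hr).
    rewrite Rabs_pos_eq by lra. simpl INR. rewrite Rmult_0_r, Rplus_0_r.
    pose proof (nleaves_pos t). apply le_INR in H0. simpl in H0.
    assert (1 <= exp (2 * lamx s gam u * r)).
    { pose proof (exp_ineq1_le (2 * lamx s gam u * r)). assert (0 <= 2 * lamx s gam u * r) by nra. lra. }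
    unfold Rdiv. rewrite Rmult_assoc, Rinv_r by lra. lra.
  - rewrite Rm_rec by auto. unfold SSx.
    set (n := INR (nleaves t)).
    assert (Hn : 1 <= n) by (unfold n; apply (le_INR 1); apply nleaves_pos).
    eapply Rle_trans. apply SS_abs. apply Hrate.
    eapply Rle_trans. apply (SS_le_grow _ _ _ _ _ Hrate t _ (fun _ => (n + 2) / (n + 2 + 2 * INR N) * exp (2 * lamx s gam u * r) / (Lt t + 2 * lamx s gam u))).
    + intros i e. apply Cv_bound; auto.
      * unfold Lt. fold n. nra.
      * apply Rmult_le_pos. lra. left; apply Rinv_0_lt_compat. pose proof (pos_INR N). lra.
      * apply Rm_cont.
      * intros z Hz. eapply Rle_trans. apply IHN. lra. unfold Bd.
        pose proof (grow_nleaves t i e) as Hg. apply le_INR in Hg. rewrite plus_INR in Hg. simpl in Hg.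
        pose proof (nleaves_pos (grow t i e)) as Hg1. apply le_INR in Hg1. simpl in Hg1.
        fold n in Hg.
        replace (exp (2 * lamx s gam u * z) * INR (nleaves (grow t i e)) / (INR (nleaves (grow t i e)) + 2 * INR N))
          with (INR (nleaves (grow t i e)) / (INR (nleaves (grow t i e)) + 2 * INR N) * exp (2 * lamx s gam u * z))
          by (field; pose proof (pos_INR N); lra).
        apply Rmult_le_compat_r. left; apply exp_pos.
        replace (n + 2 + 2 * INR N) with ((n + 2) + 2 * INR N) by ring.
        apply frac_mono; try lra. pose proof (pos_INR N); lra.
    + rewrite (SS_gen _ _ _ _ _ t _ (fun _ => 0) ((n + 2) / (n + 2 + 2 * INR N) * exp (2 * lamx s gam u * r) / (Lt t + 2 * lamx s gam u)) 0)
        by (intros; ring).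
      fold n. unfold Lt. fold n. unfold lamx. rewrite S_INR.
      pose proof (pos_INR N). assert (0 < lamv s gam u 0 1) by exact Hl.
      right. field. split; nra.
Qed.

End Main.

Lemma ball_R (x t : R) (e : posreal) : ball x e t <-> Rabs (t - x) < e.
Proof. unfold ball; simpl. unfold AbsRing_ball, abs, minus, plus, opp; simpl. tauto. Qed.

Lemma ball_R' (x t : R) (e : posreal) : ball x e t -> x - e < t < x + e.
Proof. unfold ball; simpl. unfold AbsRing_ball, abs, minus, plus, opp; simpl. intros H. apply Rabs_def2 in H. lra. Qed.

Lemma sum_n_PS s gam u y0 r N :
  sum_n (fun k => jumpsum s gam u 0 1 y0 k Lf r) N = PS s gam u y0 (S N) Lf r.
Proof.
  induction N.
  - rewrite sum_O. simpl PS. unfold J. rewrite Rplus_0_l. reflexivity.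
  - rewrite sum_Sn, IHN. simpl PS. unfold plus; simpl. unfold J. reflexivity.
Qed.

Theorem theorem2p38 (s gam u nu0 nu1 : R)
  (hnu0 : nu0 = 0) (hnu : nu0 + nu1 = 1)
  (hs : 0 < s) (hgam : 0 <= gam) (hu : 0 < u)
  (r y0 : R) (hr : 0 <= r) (hy0 : 0 <= y0 <= 1)
  (y : R -> R)
  (hy_init : y 0 = y0)
  (hy_cont0 : filterlim y (at_right 0) (locally y0))
  (hy_ode : forall xi, 0 < xi ->
     is_derive y xi (- y xi * (1 - y xi) * (s + gam * (1 - y xi)) + u * (1 - y xi))) :
  g_asg s gam u nu0 nu1 r y0 =
  y0 * exp (- RInt (fun xi => (1 - y xi) * (s + gam * (1 - y xi))) 0 r).
Proof.
  subst nu0. assert (nu1 = 1) by lra. subst nu1.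
  set (Y := fun x => y (Rmax 0 x)).
  assert (HY0 : Y 0 = y0) by (unfold Y; rewrite Rmax_left by lra; auto).
  assert (Hpos : forall x, 0 < x -> Y x = y x) by (intros; unfold Y; rewrite Rmax_right; lra).
  assert (Hneg : forall x, x <= 0 -> Y x = y0) by (intros; unfold Y; rewrite Rmax_left; lra).
  assert (HYd : forall x, 0 < x -> is_derive Y x (- Y x * (1 - Y x) * (s + gam * (1 - Y x)) + u * (1 - Y x))).
  { intros x Hx. rewrite (Hpos x Hx). apply (is_derive_ext_loc y Y).
    - exists (mkposreal x Hx). intros t Ht. apply ball_R' in Ht. simpl in Ht.
      rewrite Hpos; auto. lra.
    - apply hy_ode; auto. }
  assert (HYc : forall x, continuous Y x).
  { intros x. destruct (Rlt_or_le 0 x) as [Hx|Hx].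
    - apply (ex_derive_continuous Y). eexists. apply HYd; auto.
    - unfold continuous. apply filterlim_locally. intros eps.
      destruct (Rlt_or_le x 0) as [Hx'|Hx'].
      + assert (Hd : 0 < - x) by lra. exists (mkposreal (- x) Hd). intros t Ht.
        apply ball_R' in Ht. simpl in Ht.
        rewrite (Hneg t) by lra. rewrite (Hneg x) by lra. apply ball_center.
      + assert (x = 0) by lra. subst x.
        destruct (proj1 (filterlim_locally (F := at_right 0) y y0) hy_cont0 eps) as [d Hd].
        exists d. intros t Ht. rewrite HY0.
        destruct (Rlt_or_le 0 t) as [Ht0|Ht0].
        * rewrite Hpos by auto. apply Hd; auto.
        * rewrite Hneg by auto. apply ball_center. }
  unfold g_asg.
  rewrite (is_series_unique _ (Phi s gam y0 Y Lf r)).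
  - unfold Phi, ell, gg, Hc. cbn [Dv vf]. f_equal. f_equal. f_equal.
    apply RInt_Rext. intros x Hx. rewrite Rmin_left in Hx by lra. rewrite Hpos by lra. reflexivity.
  - change (is_lim_seq (sum_n (fun k => jumpsum s gam u 0 1 y0 k Lf r)) (Finite (Phi s gam y0 Y Lf r))).
    apply is_lim_seq_spec. intros eps.
    set (C := exp (2 * lamx s gam u * r)).
    assert (HC : 0 < C) by apply exp_pos.
    assert (He := cond_pos eps).
    destruct (nfloor_ex (C / eps)) as [N0 HN0].
    { apply Rlt_le, Rdiv_lt_0_compat; auto. }
    exists N0. intros N HN. rewrite sum_n_PS.
    pose proof (Rm_bound s gam u y0 Y HYc HYd HY0 hy0 hs hgam hu (S N) Lf r hr) as HB.
    unfold Rm in HB. rewrite Rabs_minus_sym in HB.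
    eapply Rle_lt_trans. apply HB. unfold Bd. fold C. cbn [nleaves]. change (INR 1) with 1. rewrite (S_INR N).
    apply le_INR in HN.
    assert (C / eps < INR N + 1) by lra.
    apply (Rmult_lt_reg_r (1 + 2 * (INR N + 1))). pose proof (pos_INR N). lra.
    replace (C * 1 / (1 + 2 * (INR N + 1)) * (1 + 2 * (INR N + 1))) with C by (field; pose proof (pos_INR N); lra).
    apply Rmult_lt_compat_r with (r := eps) in H; auto.
    replace (C / eps * eps) with C in H by (field; lra).
    pose proof (pos_INR N). nra.
Qed.
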